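(* Let $n\ge 0$ and $i,j\ge -1$ be integers with $i+j=n-1$, and let $p\in\Gamma_n$ be written as a concatenation $p=c\,q_2\,b\,q_1\,a$ of paths with $q_1\in\Gamma_i$ and $q_2\in\Gamma_j$. If $i$ is odd then $a$ is trivial, and if $j$ is odd then $c$ is trivial. In particular, if $i$ and $j$ are both odd, then the only such decomposition of $p$ is $p=\sigma_j(p)\,b\,\pi_i(p)$.
   Context: Let $\Bbbk$ be a field, $Q=(Q_0,Q_1,s,t)$ a finite quiver, and $A=\Bbbk Q/I$ a finite-dimensional monomial algebra, i.e. $I$ is an ideal generated by paths of length at least $2$. Paths are written from right to left: a path is $p=\alpha_n\cdots\alpha_1$ with arrows $\alpha_i$ and $t(\alpha_i)=s(\alpha_{i+1})$; vertices are the paths of length $0$ (trivial paths); $qp$ denotes concatenation when $t(p)=s(q)$. Let $\mathcal B$ be the set of paths not lying in $I$. If $p=bqa$ for paths $a,b,q$, then $q$ is a divisor of $p$; if $b$ is trivial, $q$ is a suffix; if $a$ is trivial, $q$ is a prefix; proper means $q\neq p$. For $n\ge -1$, a left $n$-ambiguity is a path $p$ with a decomposition $p=u_{-1}u_0u_1\cdots u_n$ such that $u_{-1}\in Q_0$, $u_0\in Q_1$, $u_i\in\mathcal B$ for all $i$, and for every $0\le i\le n-1$, $u_iu_{i+1}\in I$ while no proper suffix of $u_iu_{i+1}$ lies in $I$ (one writes $p=u_0\cdots u_n$). A right $n$-ambiguity is a path with a decomposition $p=v_n\cdots v_0v_{-1}$ with $v_{-1}\in Q_0$, $v_0\in Q_1$,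 $v_i\in\mathcal B$, and for $0\le i\le n-1$, $v_{i+1}v_i\in I$ while no proper prefix of $v_{i+1}v_i$ lies in $I$. A path is a left $n$-ambiguity iff it is a right $n$-ambiguity; such paths are called $n$-ambiguities, and $\Gamma_n$ denotes their set. Both decompositions of an $n$-ambiguity are unique. For $p\in\Gamma_n$ with left decomposition $u_0\cdots u_n$ and right decomposition $v_n\cdots v_0$, and $-1\le m\le n$, set $\sigma_m(p):=u_0\cdots u_m$ (a suffix of $p$ which is an $m$-ambiguity) and $\pi_m(p):=v_m\cdots v_0$ (a prefix of $p$ which is an $m$-ambiguity). *)

(* Defs.v *)
From mathcomp Require Import all_boot all_order all_algebra.
Set Implicit Arguments. Unset Strict Implicit. Unset Printing Implicit Defensive.
Import Order.TTheory GRing.Theory Num.Theory.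

(* A path is represented as (starting vertex, list of arrows in traversal
   order).  The paper's path  alpha_n ... alpha_1  (written right to left)
   is  (s alpha_1, [:: alpha_1; ...; alpha_n]);  the trivial path at v is
   (v, [::]). *)
Section Quiver.
Variables (V E : finType) (s t : E -> V).

Definition qpath := (V * seq E)%type.

Definition qstart (p : qpath) : V := p.1.
Definition qtarget (p : qpath) : V := last p.1 [seq t a | a <- p.2].
Definition qlen (p : qpath) : nat := size p.2.

Definition qvalid (p : qpath) : bool :=
  sorted (fun a b => t a == s b) p.2 &&
  (if p.2 is a :: _ then s a == p.1 else true).

(* paper's concatenation  p q  (q first, then p); defined when t(q) = s(p) *)
Definition composable (p q : qpath) : bool := qtarget q == qstart p.
Definition pcat (p q : qpath) : qpath := (q.1, q.2 ++ p.2).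

Definition trivialp (p : qpath) : bool := qvalid p && (qlen p == 0).
Definition is_arrow (p : qpath) : bool := qvalid p && (qlen p == 1).

(* The monomial ideal I generated by the list of paths R (given by their
   arrow lists): a path lies in I iff some generator divides it. *)
Variable R : seq (seq E).
Definition inI (p : qpath) : bool := has (fun r => infix r p.2) R.
Definition inB (p : qpath) : bool := qvalid p && ~~ inI p.

Definition is_suffix (q p : qpath) : Prop :=
  qvalid q /\ exists a, [/\ qvalid a, composable q a & p = pcat q a].
Definition is_prefix (q p : qpath) : Prop :=
  qvalid q /\ exists b, [/\ qvalid b, composable b q & p = pcat b q].

(* left decomposition p = u_{-1} u_0 u_1 ... u_n, with us = [:: u_0; ...; u_n] *)
Definition left_decomp (p e : qpath) (us : seq qpath) : Prop :=
  [/\ trivialp e,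
      (if us is u0 :: _ then is_arrow u0 else True),
      all inB us,
      sorted composable (e :: us) /\ p = foldl pcat e us &
      forall k, k.+1 < size us ->
        let w := pcat (nth e us k) (nth e us k.+1) in
        inI w /\ forall q, is_suffix q w -> q <> w -> ~~ inI q].

(* right decomposition p = v_n ... v_0 v_{-1}, with vs = [:: v_0; ...; v_n] *)
Definition right_decomp (p e : qpath) (vs : seq qpath) : Prop :=
  [/\ trivialp e,
      (if vs is v0 :: _ then is_arrow v0 else True),
      all inB vs,
      sorted (fun x y => composable y x) (e :: vs) /\
        p = foldl (fun acc v => pcat v acc) e vs &
      forall k, k.+1 < size vs ->
        let w := pcat (nth e vs k.+1) (nth e vs k) in
        inI w /\ forall q, is_prefix q w -> q <> w -> ~~ inI q].

Definition Gamma (m : int) (p : qpath) : Prop :=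
  (-1 <= m)%R /\ exists e us, size us = `|(m + 1)%R|%N /\ left_decomp p e us.

(* sigma_m(p) = u_{-1} u_0 ... u_m   and   pi_m(p) = v_m ... v_0 v_{-1},
   computed from a given left (resp. right) decomposition *)
Definition amb_sigma (m : int) (e : qpath) (us : seq qpath) : qpath :=
  foldl pcat e (take `|(m + 1)%R|%N us).
Definition amb_pi (m : int) (e : qpath) (vs : seq qpath) : qpath :=
  foldl (fun acc v => pcat v acc) e (take `|(m + 1)%R|%N vs).

End Quiver.

Definition is_relation (V E : finType) (s t : E -> V) (r : seq E) : bool :=
  (2 <= size r) && (if r is a :: _ then qvalid s t (s a, r) else false).

(* Main.v *)
Require Import Defs.
From mathcomp Require Import all_boot all_order all_algebra.
From mathcomp Require Import zify.
Set Implicit Arguments. Unset Strict Implicit. Unset Printing Implicit Defensive.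


Definition monoB (B : nat -> nat -> bool) :=
  forall z e z' e', B z e -> z' <= z -> e <= e' -> B z' e'.
Definition shortB (B : nat -> nat -> bool) := forall z e, B z e -> z.+2 <= e.

Definition LChain (B : nat -> nat -> bool) x y N (l : nat -> nat) : Prop :=
 [/\ l 0 = y, l N = x, (0 < N -> l 0 = (l 1).+1),
   (forall k, k.+2 <= N -> B (l k.+2) (l k) /\ forall z, l k.+2 < z -> ~~ B z (l k)) &
   (forall k, 0 < k -> k < N -> ~~ B (l k.+1) (l k))].

Definition RChain (B : nat -> nat -> bool) x y N (r : nat -> nat) : Prop :=
 [/\ r 0 = x, r N = y, (0 < N -> r 1 = (r 0).+1),
   (forall k, k.+2 <= N -> B (r k) (r k.+2) /\ forall z, z < r k.+2 -> ~~ B (r k) z) &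
   (forall k, 0 < k -> k < N -> ~~ B (r k) (r k.+1))].

Lemma L_dec B x y N l : monoB B -> shortB B -> LChain B x y N l ->
  forall k, k < N -> l k.+1 < l k.
Proof.
move=> Hm Hs [H0 HN H1 Hst Hnb] [|k] Hk.
  by rewrite (H1 (leq_ltn_trans (leq0n _) Hk)).
have [Hb _] := Hst k Hk.
have Hnk : ~~ B (l k.+1) (l k).
  case: k Hk Hb => [|k] Hk Hb.
    apply/negP => /Hs; rewrite (H1 (ltnW Hk)); lia.
  by apply: Hnb => //; lia.
rewrite ltnNge; apply/negP => Hle.
by move: Hnk; rewrite (Hm _ _ _ _ Hb Hle (leqnn _)).
Qed.

Lemma L_le B x y N l : monoB B -> shortB B -> LChain B x y N l ->
  forall k k', k <= k' -> k' <= N -> l k' + (k' - k) <= l k.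
Proof.
move=> Hm Hs HL k; elim=> [|k' IH] Hkk' HN.
  by move: Hkk'; rewrite leqn0 => /eqP ->; rewrite addn0.
case: (ltngtP k k'.+1) Hkk' => // [Hlt|<-] _; last by rewrite subnn addn0.
have := IH Hlt (ltnW HN). have := L_dec Hm Hs HL HN. lia.
Qed.

Lemma R_inc B x y N r : monoB B -> shortB B -> RChain B x y N r ->
  forall k, k < N -> r k < r k.+1.
Proof.
move=> Hm Hs [H0 HN H1 Hst Hnb] [|k] Hk.
  by rewrite (H1 (leq_ltn_trans (leq0n _) Hk)).
have [Hb _] := Hst k Hk.
have Hnk : ~~ B (r k) (r k.+1).
  case: k Hk Hb => [|k] Hk Hb.
    apply/negP => /Hs; rewrite (H1 (ltnW Hk)); lia.
  by apply: Hnb => //; lia.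
rewrite ltnNge; apply/negP => Hle.
by move: Hnk; rewrite (Hm _ _ _ _ Hb (leqnn _) Hle).
Qed.

Lemma R_le B x y N r : monoB B -> shortB B -> RChain B x y N r ->
  forall k k', k <= k' -> k' <= N -> r k + (k' - k) <= r k'.
Proof.
move=> Hm Hs HL k; elim=> [|k' IH] Hkk' HN.
  by move: Hkk'; rewrite leqn0 => /eqP ->; rewrite addn0.
case: (ltngtP k k'.+1) Hkk' => // [Hlt|<-] _; last by rewrite subnn addn0.
have := IH Hlt (ltnW HN). have := R_inc Hm Hs HL HN. lia.
Qed.

Lemma L_step B x y N l x' y' N' l' t u : monoB B ->
  LChain B x y N l -> LChain B x' y' N' l' ->
  t.+2 <= N' -> u.+2 <= N -> l' t <= l u -> l' t.+2 <= l u.+2.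
Proof.
move=> Hm [_ _ _ Hst _] [_ _ _ Hst' _] Ht Hu Hle.
have [Hb _] := Hst' t Ht. have [_ Hmin] := Hst u Hu.
rewrite leqNgt; apply/negP => /Hmin; rewrite (Hm _ _ _ _ Hb (leqnn _) Hle) //.
Qed.

Lemma R_step B x y N r x' y' N' r' t u : monoB B ->
  RChain B x y N r -> RChain B x' y' N' r' ->
  t.+2 <= N' -> u.+2 <= N -> r u <= r' t -> r u.+2 <= r' t.+2.
Proof.
move=> Hm [_ _ _ Hst _] [_ _ _ Hst' _] Ht Hu Hle.
have [Hb _] := Hst' t Ht. have [_ Hmin] := Hst u Hu.
rewrite leqNgt; apply/negP => /Hmin; rewrite (Hm _ _ _ _ Hb Hle (leqnn _)) //.
Qed.

Lemma L_iter B x y N l x' y' N' l' t u : monoB B ->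
  LChain B x y N l -> LChain B x' y' N' l' -> l' t <= l u ->
  forall s, t + s.*2 <= N' -> u + s.*2 <= N -> l' (t + s.*2) <= l (u + s.*2).
Proof.
move=> Hm HL HL' H0; elim=> [|s IH] Ht Hu; first by rewrite !addn0.
have -> : t + s.+1.*2 = (t + s.*2).+2 by rewrite doubleS !addnS.
have -> : u + s.+1.*2 = (u + s.*2).+2 by rewrite doubleS !addnS.
apply: (L_step Hm HL HL'); try lia; apply: IH; lia.
Qed.

Lemma R_iter B x y N r x' y' N' r' t u : monoB B ->
  RChain B x y N r -> RChain B x' y' N' r' -> r u <= r' t ->
  forall s, t + s.*2 <= N' -> u + s.*2 <= N -> r (u + s.*2) <= r' (t + s.*2).
Proof.
move=> Hm HL HL' H0; elim=> [|s IH] Ht Hu; first by rewrite !addn0.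
have -> : t + s.+1.*2 = (t + s.*2).+2 by rewrite doubleS !addnS.
have -> : u + s.+1.*2 = (u + s.*2).+2 by rewrite doubleS !addnS.
apply: (R_step Hm HL HL'); try lia; apply: IH; lia.
Qed.

Lemma L_all B x y N l x' y' N' l' : monoB B ->
  LChain B x y N l -> LChain B x' y' N' l' -> l' 0 <= l 0 ->
  forall t, t <= N' -> t <= N -> l' t <= l t.
Proof.
move=> Hm HL HL' H0.
suff H : forall t, (t <= N' -> t <= N -> l' t <= l t) /\
                   (t.+1 <= N' -> t.+1 <= N -> l' t.+1 <= l t.+1).
  by move=> t; case: (H t).
elim=> [|t [IH1 IH2]].
  split=> // H1 H2.
  case: HL => _ _ E _ _; case: HL' => _ _ E' _ _.
  move: H0; rewrite (E H2) (E' H1); lia.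
split=> // H1 H2.
apply: (L_step Hm HL HL') => //; apply: IH1; lia.
Qed.

Lemma R_all B x y N r x' y' N' r' : monoB B ->
  RChain B x y N r -> RChain B x' y' N' r' -> r 0 <= r' 0 ->
  forall t, t <= N' -> t <= N -> r t <= r' t.
Proof.
move=> Hm HL HL' H0.
suff H : forall t, (t <= N' -> t <= N -> r t <= r' t) /\
                   (t.+1 <= N' -> t.+1 <= N -> r t.+1 <= r' t.+1).
  by move=> t; case: (H t).
elim=> [|t [IH1 IH2]].
  split=> // H1 H2.
  case: HL => _ _ E _ _; case: HL' => _ _ E' _ _.
  move: H0; rewrite (E H2) (E' H1); lia.
split=> // H1 H2.
apply: (R_step Hm HL HL') => //; apply: IH1; lia.
Qed.

Definition rho (B : nat -> nat -> bool) y z := find (B z) (iota 0 y.+1).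

Lemma rho_le (B : nat -> nat -> bool) y z e : B z e -> e <= y -> rho B y z <= e.
Proof.
move=> Hb Hey; rewrite leqNgt; apply/negP => Hlt.
have := before_find 0 Hlt; rewrite nth_iota ?add0n ?Hb //; lia.
Qed.

Lemma rho_bad (B : nat -> nat -> bool) y z : rho B y z <= y -> B z (rho B y z).
Proof.
move=> H.
have Hh : has (B z) (iota 0 y.+1) by rewrite has_find size_iota.
by have := nth_find 0 Hh; rewrite nth_iota ?add0n.
Qed.

Lemma rho_min (B : nat -> nat -> bool) y z z' : z' < rho B y z -> ~~ B z z'.
Proof.
move=> Hlt.
have Hs : rho B y z <= y.+1 by rewrite -(size_iota 0 y.+1) find_size.
have := before_find 0 Hlt; rewrite nth_iota ?add0n => [->//|]; lia.
Qed.

Fixpoint rr (B : nat -> nat -> bool) x y k :=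
  match k with 0 => x | 1 => x.+1 | k'.+2 => rho B y (rr B x y k') end.

Lemma L_R (B : nat -> nat -> bool) x y N l : monoB B -> shortB B -> LChain B x y N l ->
  exists r, RChain B x y N r.
Proof.
move=> Hm Hs HL.
have HLc := HL; case: HLc => H0 HN H1 Hst Hnb.
case: N HL HN H1 Hst Hnb => [|n] HL HN H1 Hst Hnb.
  exists (fun _ => x); split=> //; by rewrite -HN H0.
have Hley : forall k, k <= n.+1 -> l k <= y.
  move=> k Hk; have := L_le Hm Hs HL (leq0n k) Hk; lia.
set r := rr B x y.
have Q : forall k, (k <= n -> r k <= l (n.+1 - k) /\ ~~ B (r k) (l (n - k))) /\
                   (k.+1 <= n -> r k.+1 <= l (n.+1 - k.+1) /\ ~~ B (r k.+1) (l (n - k.+1))).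
  elim=> [|k [IH1 IH2]].
    split=> [_|Hn].
      rewrite subn0 /= HN; split=> //.
      case: n HL HN H1 Hst Hnb Hley => [|n] HL HN H1 Hst Hnb Hley.
        rewrite /r /=; apply/negP => /Hs; rewrite (H1 isT) HN; lia.
      by rewrite /r /= -HN Hnb.
    split.
      rewrite /r /= subn1 /=; have := L_dec Hm Hs HL (ltnSn n); rewrite HN //.
    have [_ Hmin] := Hst n.-1 (ltac:(lia)).
    rewrite /r /= subn1; apply: Hmin; rewrite (_ : n.-1.+2 = n.+1) ?HN //; lia.
  split=> // Hk.
  have [Ha Hb] := IH1 (ltac:(lia)).
  set a := n - k.+2.
  have Ea : n.+1 - k = a.+3 by rewrite /a; lia.
  have Eb : n - k = a.+2 by rewrite /a; lia.
  have Ec : n.+1 - k.+2 = a.+1 by rewrite /a; lia.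
  rewrite Ea Eb in Ha Hb; rewrite Ec.
  have [Hbad _] := Hst a.+1 (ltac:(rewrite /a; lia)).
  have [_ Hmin] := Hst a (ltac:(rewrite /a; lia)).
  have Hrle : rho B y (r k) <= l a.+1.
    apply: rho_le; last by apply: Hley; rewrite /a; lia.
    exact: (Hm _ _ _ _ Hbad Ha (leqnn _)).
  have Hrgt : l a.+2 < rho B y (r k).
    rewrite ltnNge; apply/negP => Hle.
    have := rho_bad (leq_trans Hrle (Hley a.+1 (ltac:(rewrite /a; lia)))).
    move=> Hb'; move: Hb; rewrite (Hm _ _ _ _ Hb' (leqnn _) Hle) //.
  rewrite (_ : r k.+2 = rho B y (r k)) //; split=> //; exact: Hmin.
have Hfin : r n.+1 = y.
  case: n HL HN H1 Hst Hnb Hley Q => [|n] HL HN H1 Hst Hnb Hley Q.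
    by rewrite /r /= -H0 (H1 isT) HN.
  have [Ha Hb] := (Q n).1 (ltnW (ltnSn n)).
  rewrite (_ : n.+2 - n = 2) in Ha; last lia. rewrite (_ : n.+1 - n = 1) in Hb; last lia.
  have [Hbad _] := Hst 0 (ltac:(lia)).
  have Hrle : rho B y (r n) <= y.
    apply: rho_le => //; rewrite -H0; exact: (Hm _ _ _ _ Hbad Ha (leqnn _)).
  have Hrgt : l 1 < rho B y (r n).
    rewrite ltnNge; apply/negP => Hle.
    have Hb' := rho_bad Hrle.
    move: Hb; rewrite (Hm _ _ _ _ Hb' (leqnn _) Hle) //.
  rewrite /r /=; move: Hrgt; rewrite -/r; move: Hrle; rewrite -H0 (H1 isT); lia.
have Hrley : forall k, k <= n.+1 -> r k <= y.
  move=> k Hk; case: (ltngtP k n.+1) Hk => // [Hlt|->] _; last by rewrite Hfin.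
  have := (Q k).1 (ltac:(lia)); case=> H _; apply: leq_trans H _; apply: Hley; lia.
exists r; split=> //.
- move=> k Hk.
  have Hy : r k.+2 <= y by apply: Hrley.
  split; first exact: rho_bad.
  move=> z Hz; apply: (@rho_min B y); exact: Hz.
- move=> k Hk0 Hk.
  have [_ Hb] := (Q k).1 (ltac:(lia)).
  apply/negP => Hb'; move: Hb; rewrite (Hm _ _ _ _ Hb') //.
  have [Hlt|->] : k < n \/ k = n by lia.
    have [H _] := (Q k.+1).1 Hlt; by rewrite subSS in H.
  by rewrite Hfin subnn H0.
Qed.


Definition seg (T : Type) (w : seq T) z e := drop z (take e w).
Definition badw (E : eqType) (R : seq (seq E)) (w : seq E) z e :=
  has (fun r => infix r (seg w z e)) R.

Lemma seg_sub (T : Type) (w : seq T) z e z' e' : z <= z' -> e' <= e ->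
  seg w z' e' = drop (z' - z) (take (e' - z) (seg w z e)).
Proof.
move=> Hz He; rewrite /seg take_drop drop_drop.
have -> : e' - z + z = if z <= e' then e' else z by case: leqP => H; lia.
case: leqP => H.
  by rewrite take_takel // subnK.
by rewrite !drop_oversize // size_take_min; lia.
Qed.

Lemma badw_mono (E : eqType) (R : seq (seq E)) w :
  (forall r, r \in R -> 2 <= size r) -> monoB (badw R w).
Proof.
move=> HR z e z' e' /hasP [r Hr Hi] Hz He; apply/hasP; exists r => //.
rewrite (seg_sub w Hz He) in Hi.
apply: (infix_trans Hi).
set X := seg w z' e'.
rewrite -[X in infix _ X](cat_take_drop (e - z')) -[X in infix _ (X ++ _)](cat_take_drop (z - z')).
exact/infix_catr/suffix_infix.
Qed.

Lemma badw_short (E : eqType) (R : seq (seq E)) w :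
  (forall r, r \in R -> 2 <= size r) -> shortB (badw R w).
Proof.
move=> HR z e /hasP [r Hr /size_infix]; rewrite /seg size_drop size_take_min.
have := HR r Hr; lia.
Qed.

Lemma seg_shift (T : Type) (A q C : seq T) z e : e <= size q ->
  seg (A ++ q ++ C) (size A + z) (size A + e) = seg q z e.
Proof.
move=> He; rewrite /seg take_cat.
case: ltnP => H; first lia.
rewrite addKn takel_cat // addnC -drop_drop drop_size_cat //.
Qed.

Lemma badw_shift (E : eqType) (R : seq (seq E)) (A q C : seq E) z e : e <= size q ->
  badw R (A ++ q ++ C) (size A + z) (size A + e) = badw R q z e.
Proof. by move=> He; rewrite /badw seg_shift. Qed.


Lemma qvalid_cat (V E : finType) (s t : E -> V) v (A B : seq E) :
  qvalid s t (v, A ++ B) = qvalid s t (v, A) && qvalid s t (qtarget t (v, A), B).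
Proof.
case: A => [|a A] /=; first by [].
rewrite /qvalid /qtarget /= cat_path last_map.
case: B => [|b B] /=; first by rewrite !andbT.
by rewrite (eq_sym (s b)); case: (path _ a A); case: (s a == v); case: (_ == _); case: (path _ b B).
Qed.

Lemma qvalid_pcat (V E : finType) (s t : E -> V) (x y : qpath V E) :
  qvalid s t x -> qvalid s t y -> composable t x y -> qvalid s t (pcat x y).
Proof.
case: x => [vx X]; case: y => [vy Y] Hx Hy /eqP Hc.
by rewrite /pcat /= qvalid_cat Hy Hc.
Qed.

Lemma qtarget_pcat (V E : finType) (t : E -> V) (x y : qpath V E) :
  composable t x y -> qtarget t (pcat x y) = qtarget t x.
Proof.
case: x => [vx X]; case: y => [vy Y] /eqP Hc.
by rewrite /qtarget /pcat /= map_cat last_cat; move: Hc; rewrite /qtarget /qstart /= => ->.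
Qed.

Lemma foldl_left (V E : finType) (s t : E -> V) (e : qpath V E) us :
  sorted (composable t) (e :: us) -> qvalid s t e -> all (qvalid s t) us ->
  qvalid s t (foldl (@pcat V E) e us) /\ qtarget t (foldl (@pcat V E) e us) = qtarget t e.
Proof.
elim: us e => [|u us IH] e //= /andP [Hc Hp] He /andP [Hu Hus].
have Hp' : path (composable t) (pcat e u) us by case: us {IH Hus} Hp.
have [H1 H2] := IH (pcat e u) Hp' (qvalid_pcat He Hu Hc) Hus.
by rewrite H1 H2 qtarget_pcat.
Qed.

Lemma foldl_left2 (V E : finType) (e : qpath V E) us :
  (foldl (@pcat V E) e us).2 = flatten (rev (map snd us)) ++ e.2.
Proof.
elim: us e => [|u us IH] e //=.
by rewrite IH /= rev_cons flatten_rcons -catA.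
Qed.

Lemma foldl_right (V E : finType) (e : qpath V E) vs :
  (foldl (fun acc v => pcat v acc) e vs).2 = e.2 ++ flatten (map snd vs) /\
  (foldl (fun acc v => pcat v acc) e vs).1 = e.1.
Proof.
elim: vs e => [|v vs IH] e /=; first by rewrite cats0.
by have [-> ->] := IH (pcat v e); rewrite /= catA.
Qed.

Lemma qpath_eq (V E : finType) (s t : E -> V) (x y : qpath V E) :
  qvalid s t x -> qvalid s t y -> x.2 = y.2 -> qtarget t x = qtarget t y -> x = y.
Proof.
case: x => [vx X]; case: y => [vy Y] /= Hx Hy HXY; subst Y.
case: X Hx Hy => [|a X] /=; first by rewrite /qtarget /= => _ _ ->.
by rewrite /qvalid /= => /andP [_ /eqP <-] /andP [_ /eqP <-].
Qed.

Definition lpos (T : Type) (ws : seq (seq T)) k := sumn (map size (drop k ws)).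
Definition rpos (T : Type) (ws : seq (seq T)) k := sumn (map size (take k ws)).

Lemma lpos_T1 (T : Type) (ws : seq (seq T)) k :
  take (lpos ws k) (flatten (rev ws)) = flatten (rev (drop k ws)).
Proof.
rewrite -{2}(cat_take_drop k ws) rev_cat flatten_cat take_size_cat //.
by rewrite size_flatten /shape map_rev sumn_rev.
Qed.

Lemma size_lpos (T : Type) (ws : seq (seq T)) : size (flatten (rev ws)) = lpos ws 0.
Proof. by rewrite size_flatten /shape map_rev sumn_rev /lpos drop0. Qed.

Lemma lpos_S (T : Type) (ws : seq (seq T)) k : k < size ws ->
  lpos ws k = size (nth [::] ws k) + lpos ws k.+1.
Proof. by move=> Hk; rewrite /lpos (drop_nth [::] Hk). Qed.

Lemma lpos_T2 (T : Type) (ws : seq (seq T)) k : k < size ws ->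
  seg (flatten (rev ws)) (lpos ws k.+1) (lpos ws k) = nth [::] ws k.
Proof.
move=> Hk; rewrite /seg lpos_T1 (drop_nth [::] Hk) rev_cons flatten_rcons drop_size_cat //.
by rewrite size_flatten /shape map_rev sumn_rev.
Qed.

Lemma lpos_T3 (T : Type) (ws : seq (seq T)) k : k.+1 < size ws ->
  seg (flatten (rev ws)) (lpos ws k.+2) (lpos ws k) = nth [::] ws k.+1 ++ nth [::] ws k.
Proof.
move=> Hk; rewrite /seg lpos_T1 (drop_nth [::] (ltnW Hk)) (drop_nth [::] Hk).
rewrite !rev_cons !flatten_rcons -catA drop_size_cat //.
by rewrite size_flatten /shape map_rev sumn_rev.
Qed.

Lemma rpos_T1 (T : Type) (ws : seq (seq T)) k :
  take (rpos ws k) (flatten ws) = flatten (take k ws).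
Proof.
by rewrite -{2}(cat_take_drop k ws) flatten_cat take_size_cat // size_flatten.
Qed.

Lemma size_rpos (T : Type) (ws : seq (seq T)) : size (flatten ws) = rpos ws (size ws).
Proof. by rewrite size_flatten /rpos take_size. Qed.

Lemma rpos_S (T : Type) (ws : seq (seq T)) k : k < size ws ->
  rpos ws k.+1 = rpos ws k + size (nth [::] ws k).
Proof. by move=> Hk; rewrite /rpos (take_nth [::] Hk) -cats1 map_cat sumn_cat /= addn0. Qed.

Lemma rpos_T2 (T : Type) (ws : seq (seq T)) k : k < size ws ->
  seg (flatten ws) (rpos ws k) (rpos ws k.+1) = nth [::] ws k.
Proof.
move=> Hk; rewrite /seg rpos_T1 (take_nth [::] Hk) flatten_rcons drop_size_cat //.
by rewrite size_flatten.
Qed.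

Lemma rpos_T3 (T : Type) (ws : seq (seq T)) k : k.+1 < size ws ->
  seg (flatten ws) (rpos ws k) (rpos ws k.+2) = nth [::] ws k ++ nth [::] ws k.+1.
Proof.
move=> Hk; rewrite /seg rpos_T1 (take_nth [::] Hk) (take_nth [::] (ltnW Hk)).
rewrite !flatten_rcons -catA drop_size_cat //.
by rewrite size_flatten.
Qed.


Lemma left_chain (V E : finType) (s t : E -> V) (R : seq (seq E))
  (HR : forall r, r \in R -> 2 <= size r) (p e : qpath V E) us :
  left_decomp s t R p e us ->
  p.2 = flatten (rev (map snd us)) /\
  LChain (badw R p.2) 0 (size p.2) (size us) (lpos (map snd us)).
Proof.
case=> He Harr Hall [Hsort Hp] Hcond.
set ws := map snd us.
have Hsz : size ws = size us by rewrite size_map.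
have He2 : e.2 = [::] by move: He => /andP [_]; rewrite /qlen; case: (e.2).
have Hw : p.2 = flatten (rev ws) by rewrite Hp foldl_left2 He2 cats0.
split=> //; rewrite Hw.
have Hnth : forall k, k < size us -> nth [::] ws k = (nth e us k).2.
  by move=> k Hk; rewrite (nth_map e).
have Hval : forall k, k < size us -> inB s t R (nth e us k).
  by move=> k Hk; apply: (all_nthP e Hall).
split.
- by rewrite size_lpos.
- by rewrite /lpos -Hsz drop_size.
- move=> H0; rewrite lpos_S ?Hsz // Hnth //.
  have Ha0 : forall us0 : seq (qpath V E),
      (if us0 is u0 :: _ then is_arrow s t u0 else True) -> 0 < size us0 ->
      is_arrow s t (nth e us0 0) by case.
  by have /andP [_] := Ha0 us Harr H0; rewrite /qlen => /eqP ->.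
- move=> k Hk.
  have Hk1 : k.+1 < size us by [].
  have [HI Hsuf] := Hcond k Hk1.
  set w' := pcat (nth e us k) (nth e us k.+1) in HI Hsuf.
  have HS : seg (flatten (rev ws)) (lpos ws k.+2) (lpos ws k) = w'.2.
    by rewrite lpos_T3 ?Hsz // !Hnth //; lia.
  split; first by rewrite /badw HS.
  move=> z Hz.
  have HsizeS : size w'.2 = lpos ws k - lpos ws k.+2.
    have Hk1w : k.+1 < size ws by rewrite Hsz. have E1 := lpos_S (ltnW Hk1w); have E2 := lpos_S Hk1w. rewrite /w' /= size_cat -!Hnth //; try lia.
  case: (leqP (lpos ws k) z) => Hzk.
    apply/negP => /(badw_short HR); lia.
  have Hseg : seg (flatten (rev ws)) z (lpos ws k) = drop (z - lpos ws k.+2) w'.2.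
    by rewrite (seg_sub _ (ltnW Hz) (leqnn _)) HS -HsizeS take_size.
  have Hvw : qvalid s t w'.
    have Hc : composable t (nth e us k) (nth e us k.+1).
      by move/(pathP e): Hsort => /(_ k.+1 Hk1) /=.
    have /andP [Hv1 _] := Hval k (ltnW Hk1).
    have /andP [Hv2 _] := Hval k.+1 Hk1.
    exact: qvalid_pcat.
  set d := z - lpos ws k.+2.
  have Hd0 : 0 < d by rewrite /d; lia.
  have Hds : d < size w'.2 by rewrite HsizeS /d; lia.
  rewrite /badw Hseg.
  have Hv' : qvalid s t (w'.1, take d w'.2 ++ drop d w'.2) by rewrite cat_take_drop; case: (w') Hvw.
  rewrite qvalid_cat in Hv'; case/andP: Hv' => Hva Hvq.
  apply: (Hsuf (qtarget t (w'.1, take d w'.2), drop d w'.2)).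
    split=> //; exists (w'.1, take d w'.2); split=> //.
      by rewrite /composable /qstart /=.
    by rewrite /pcat /= cat_take_drop.
  move=> Heq; have H2 : drop d w'.2 = w'.2 by rewrite -{2}Heq. have := congr1 size H2; rewrite size_drop; lia.
- move=> k Hk0 Hk; rewrite /badw lpos_T2 ?Hsz // Hnth //.
  by have /andP [_] := Hval k Hk.
Qed.

Lemma right_chain (V E : finType) (s t : E -> V) (R : seq (seq E))
  (HR : forall r, r \in R -> 2 <= size r) (p e : qpath V E) vs :
  right_decomp s t R p e vs ->
  [/\ p.2 = flatten (map snd vs), p.1 = e.1 &
  RChain (badw R p.2) 0 (size p.2) (size vs) (rpos (map snd vs))].
Proof.
case=> He Harr Hall [Hsort Hp] Hcond.
set ws := map snd vs.
have Hsz : size ws = size vs by rewrite size_map.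
have He2 : e.2 = [::] by move: He => /andP [_]; rewrite /qlen; case: (e.2).
have [Hp2 Hp1] := foldl_right e vs.
have Hw : p.2 = flatten ws by rewrite Hp Hp2 He2.
split=> //; first by rewrite Hp Hp1.
rewrite Hw.
have Hnth : forall k, k < size vs -> nth [::] ws k = (nth e vs k).2.
  by move=> k Hk; rewrite (nth_map e).
have Hval : forall k, k < size vs -> inB s t R (nth e vs k).
  by move=> k Hk; apply: (all_nthP e Hall).
split.
- by rewrite /rpos take0.
- by rewrite size_rpos Hsz.
- move=> H0; rewrite rpos_S ?Hsz // Hnth //.
  have Ha0 : forall us0 : seq (qpath V E),
      (if us0 is u0 :: _ then is_arrow s t u0 else True) -> 0 < size us0 ->
      is_arrow s t (nth e us0 0) by case.
  have /andP [_] := Ha0 vs Harr H0; rewrite /qlen => /eqP ->. by rewrite addn1.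
- move=> k Hk.
  have Hk1 : k.+1 < size vs by [].
  have [HI Hsuf] := Hcond k Hk1.
  set w' := pcat (nth e vs k.+1) (nth e vs k) in HI Hsuf.
  have HS : seg (flatten ws) (rpos ws k) (rpos ws k.+2) = w'.2.
    by rewrite rpos_T3 ?Hsz // !Hnth //; lia.
  split; first by rewrite /badw HS.
  move=> z Hz.
  have HsizeS : size w'.2 = rpos ws k.+2 - rpos ws k.
    have Hk1w : k.+1 < size ws by rewrite Hsz. have E1 := rpos_S (ltnW Hk1w); have E2 := rpos_S Hk1w. rewrite /w' /= size_cat -!Hnth //; try lia.
  case: (leqP z (rpos ws k).+1) => Hzk.
    apply/negP => /(badw_short HR); lia.
  have Hseg : seg (flatten ws) (rpos ws k) z = take (z - rpos ws k) w'.2.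
    by rewrite (seg_sub _ (leqnn _) (ltnW Hz)) HS subnn drop0.
  have Hvw : qvalid s t w'.
    have Hc : composable t (nth e vs k.+1) (nth e vs k).
      by move/(pathP e): Hsort => /(_ k.+1 Hk1) /=.
    have /andP [Hv1 _] := Hval k (ltnW Hk1).
    have /andP [Hv2 _] := Hval k.+1 Hk1.
    exact: qvalid_pcat.
  set d := z - rpos ws k.
  have Hd0 : 0 < d by rewrite /d; lia.
  have Hds : d < size w'.2 by rewrite HsizeS /d; lia.
  rewrite /badw Hseg.
  have Hv' : qvalid s t (w'.1, take d w'.2 ++ drop d w'.2) by rewrite cat_take_drop; case: (w') Hvw.
  rewrite qvalid_cat in Hv'; case/andP: Hv' => Hva Hvq.
  apply: (Hsuf (w'.1, take d w'.2)).
    split=> //; exists (qtarget t (w'.1, take d w'.2), drop d w'.2); split=> //.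
      by rewrite /composable /qstart /=.
    by rewrite /pcat /= cat_take_drop.
  move=> Heq; have H2 : take d w'.2 = w'.2 by rewrite -{2}Heq.
  have := congr1 size H2; rewrite size_take; case: ifP; lia.
- move=> k Hk0 Hk; rewrite /badw rpos_T2 ?Hsz // Hnth //.
  by have /andP [_] := Hval k Hk.
Qed.


Lemma LChain_shift (E : eqType) (R : seq (seq E)) (HR : forall r, r \in R -> 2 <= size r)
  (A q C : seq E) N l :
  LChain (badw R q) 0 (size q) N l ->
  LChain (badw R (A ++ q ++ C)) (size A) (size A + size q) N (fun k => size A + l k).
Proof.
move=> HL.
have Hle : forall k, k <= N -> l k <= size q.
  move=> k Hk; have := L_le (badw_mono (w:=q) HR) (badw_short (w:=q) HR) HL (leq0n k) Hk.
  by case: HL => -> _ _ _ _; lia.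
case: HL => H0 HN H1 Hst Hnb; split.
- by rewrite H0.
- by rewrite HN addn0.
- by move=> H; rewrite (H1 H) addnS.
- move=> k Hk; have [Hb Hmin] := Hst k Hk.
  rewrite badw_shift ?Hle //; last by apply: ltnW; apply: ltnW.
  split=> // z Hz.
  have Hz' : size A <= z by lia.
  rewrite -(subnKC Hz') badw_shift ?Hle //; last by apply: ltnW; apply: ltnW.
  apply: Hmin; lia.
- move=> k Hk0 Hk; rewrite badw_shift ?Hle //; last by apply: ltnW.
  exact: Hnb.
Qed.

Lemma RChain_shift (E : eqType) (R : seq (seq E)) (HR : forall r, r \in R -> 2 <= size r)
  (A q C : seq E) N r :
  RChain (badw R q) 0 (size q) N r ->
  RChain (badw R (A ++ q ++ C)) (size A) (size A + size q) N (fun k => size A + r k).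
Proof.
move=> HL.
have Hle : forall k, k <= N -> r k <= size q.
  move=> k Hk; have := R_le (badw_mono (w:=q) HR) (badw_short (w:=q) HR) HL Hk (leqnn N).
  by case: HL => _ -> _ _ _; lia.
case: HL => H0 HN H1 Hst Hnb; split.
- by rewrite H0 addn0.
- by rewrite HN.
- by move=> H; rewrite (H1 H) addnS.
- move=> k Hk; have [Hb Hmin] := Hst k Hk.
  rewrite badw_shift ?Hle //.
  split=> // z Hz.
  case: (leqP (size A) z) => Hz'.
    have Hq2 := Hle k.+2 Hk.
    have Hzq : z - size A <= size q by lia.
    rewrite -(subnKC Hz') badw_shift //.
    apply: Hmin; lia.
  apply/negP => Hb'; have := badw_short HR Hb'; lia.
- move=> k Hk0 Hk; rewrite badw_shift ?Hle //.
  exact: Hnb.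
Qed.

Lemma lpos_D (T : Type) (ws : seq (seq T)) k :
  drop (lpos ws k) (flatten (rev ws)) = flatten (rev (take k ws)).
Proof.
rewrite -{2}(cat_take_drop k ws) rev_cat flatten_cat drop_size_cat //.
by rewrite size_flatten /shape map_rev sumn_rev.
Qed.

Lemma int_conv (i : int) : (-1 <= i)%R ->
  (i = (`|(i + 1)%R|%N)%:Z - 1)%R /\ odd `|i|%N = ~~ odd `|(i + 1)%R|%N.
Proof.
case: i => [k|[|k]] // _.
  have -> : (Posz k + 1)%R = Posz k.+1 by rewrite -addn1 PoszD.
  split; last by rewrite /= negbK.
  by rewrite -addn1 PoszD GRing.addrK.
Qed.

Lemma left_decomp_prefix (V E : finType) (s t : E -> V) (R : seq (seq E)) (p e : qpath V E) us :
  left_decomp s t R p e us -> forall k,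
  qvalid s t (foldl (@pcat V E) e (take k us)) /\
  qtarget t (foldl (@pcat V E) e (take k us)) = qtarget t e.
Proof.
case=> He _ Hall [Hsort _] _ k.
apply: foldl_left.
- move: Hsort; rewrite -{1}(cat_take_drop k us) -cat_cons => /cat_sorted2 [] //.
- by case/andP: He.
- have : all (qvalid s t) us by apply: sub_all Hall => x /andP [].
  by rewrite -{1}(cat_take_drop k us) all_cat => /andP [].
Qed.

Unset Implicit Arguments.
Import Order.TTheory GRing.Theory Num.Theory.

Theorem mainTheorem10 (V E : finType) (s t : E -> V) (R : seq (seq E))
  (HR : forall r, r \in R -> is_relation s t r)
  (Hfd : exists N : nat, forall p : qpath V E,
           qvalid s t p -> (N <= qlen p)%N -> inI R p)
  (n : nat) (i j : int)
  (Hi : (-1 <= i)%R) (Hj : (-1 <= j)%R) (Hij : (i + j = n%:Z - 1)%R)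
  (p a b c q1 q2 : qpath V E)
  (Hp : Gamma s t R n%:Z p) (Hq1 : Gamma s t R i q1) (Hq2 : Gamma s t R j q2)
  (Ha : qvalid s t a) (Hb : qvalid s t b) (Hc : qvalid s t c)
  (Hca : [/\ composable t q1 a, composable t b q1,
             composable t q2 b & composable t c q2])
  (Hdec : p = pcat c (pcat q2 (pcat b (pcat q1 a)))) :
  [/\ (odd `|i|%N -> trivialp s t a),
      (odd `|j|%N -> trivialp s t c) &
      (odd `|i|%N -> odd `|j|%N ->
        trivialp s t a /\ trivialp s t c /\
        (forall e us, left_decomp s t R p e us -> q2 = amb_sigma j e us) /\
        (forall e vs, right_decomp s t R p e vs -> q1 = amb_pi i e vs))].
Proof.
have HRsz : forall r, r \in R -> (2 <= size r)%N by move=> r /HR /andP [].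
have Hw : p.2 = a.2 ++ q1.2 ++ b.2 ++ q2.2 ++ c.2 by rewrite Hdec /pcat /= -!catA.
have Hw2 : p.2 = (a.2 ++ q1.2 ++ b.2) ++ q2.2 ++ c.2 by rewrite Hw -!catA.
have Hp1 : p.1 = a.1 by rewrite Hdec.
have Hm := badw_mono (w:=p.2) HRsz; have Hs := badw_short (w:=p.2) HRsz.
case: Hp => _ [ep [usp [Hszp Hlp]]].
have [Hwp HLp] := left_chain HRsz Hlp.
have En : `|(n%:Z + 1)%R|%N = n.+1 by lia.
rewrite Hszp En in HLp.
case: Hq1 => _ [e1 [us1 [Hsz1 Hl1]]].
have [_ HL1] := left_chain HRsz Hl1.
case: Hq2 => _ [e2 [us2 [Hsz2 Hl2]]].
have [_ HL2] := left_chain HRsz Hl2.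
have [Ei Oi] := int_conv Hi; have [Ej Oj] := int_conv Hj.
set I := `|(i + 1)%R|%N in Hsz1 Ei Oi.
set J := `|(j + 1)%R|%N in Hsz2 Ej Oj.
have HIJ : (I + J = n.+1)%N by lia.
rewrite Hsz1 in HL1; rewrite Hsz2 in HL2.
have HL1s : LChain (badw R p.2) (size a.2) (size a.2 + size q1.2) I
      (fun k => size a.2 + lpos (map snd us1) k).
  rewrite Hw; exact: (LChain_shift HRsz a.2 (b.2 ++ q2.2 ++ c.2) HL1).
have HL2s : LChain (badw R p.2) (size (a.2 ++ q1.2 ++ b.2)) (size (a.2 ++ q1.2 ++ b.2) + size q2.2) J
      (fun k => size (a.2 ++ q1.2 ++ b.2) + lpos (map snd us2) k).
  rewrite Hw2; exact: (LChain_shift HRsz (a.2 ++ q1.2 ++ b.2) c.2 HL2).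
have Hsize : size p.2 = size a.2 + size q1.2 + size b.2 + size q2.2 + size c.2.
  by rewrite Hw !size_cat; lia.
have Hgam : size (a.2 ++ q1.2 ++ b.2) = size a.2 + size q1.2 + size b.2.
  by rewrite !size_cat; lia.
have ClaimA : ~~ odd I -> size a.2 = 0.
  move=> HI.
  have HmJ := L_all Hm HLp HL2s.
  case: (HL2s) => E20 E2N _ _ _.
  case: (HLp) => Ep0 EpN _ _ _.
  have H1 : (size (a.2 ++ q1.2 ++ b.2) <= lpos (map snd usp) J)%N.
    have H0 : (size (a.2 ++ q1.2 ++ b.2) + lpos (map snd us2) 0 <= lpos (map snd usp) 0)%N.
      rewrite E20 Ep0; lia.
    have := HmJ H0 J (leqnn _) (ltac:(lia)).
    by rewrite E2N.
  have HI2 : (I./2).*2 = I by have := odd_double_half I; rewrite (negbTE HI).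
  have := @L_iter _ _ _ _ _ _ _ _ _ 0 J Hm HLp HL1s _ (I./2).
  case: (HL1s) => E10 E1N _ _ _.
  rewrite HI2 add0n (addnC J) HIJ E1N EpN => H.
  have : (size a.2 <= 0)%N.
    apply: H; try lia.
  lia.
have [rp HRp] := L_R Hm Hs HLp.
have [r1 HR1] := L_R Hm Hs HL1s.
have [r2 HR2] := L_R Hm Hs HL2s.
have ClaimB : ~~ odd J -> size c.2 = 0.
  move=> HJ.
  case: (HRp) => Ep0 EpN _ _ _.
  case: (HR1) => E10 E1N _ _ _.
  case: (HR2) => E20 E2N _ _ _.
  have H1 := R_all (t:=I) Hm HRp HR1 (ltac:(rewrite Ep0 E10; lia)) (leqnn _) (ltac:(lia)).
  rewrite E1N in H1.
  have HJ2 : (J./2).*2 = J by have := odd_double_half J; rewrite (negbTE HJ).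
  have := @R_iter _ _ _ _ _ _ _ _ _ 0 I Hm HRp HR2 _ (J./2).
  rewrite HJ2 add0n HIJ E2N EpN => H.
  have : (size p.2 <= size (a.2 ++ q1.2 ++ b.2) + size q2.2)%N.
    apply: H; try lia.
  lia.
have Hta : forall x : qpath V E, qvalid s t x -> size x.2 = 0 -> trivialp s t x.
  by move=> x Hx H0; rewrite /trivialp Hx /qlen H0.
have Oi' : odd `|i|%N -> ~~ odd I by rewrite Oi.
have Oj' : odd `|j|%N -> ~~ odd J by rewrite Oj.
split.
- by move=> /Oi' /ClaimA; apply: Hta.
- by move=> /Oj' /ClaimB; apply: Hta.
move=> /Oi' /ClaimA Ha0 /Oj' /ClaimB Hc0.
split; first exact: Hta.
split; first exact: Hta.
case: Hca => Hc1 Hcb Hc3 Hc4.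
split.
- move=> e us Hl.
  have [Hwu HLu] := left_chain HRsz Hl.
  have Hc2 : c.2 = [::] by apply/size0nil.
  have Ha2 : a.2 = [::] by apply/size0nil.
  case: (HL2s) => E20 E2N _ _ _.
  case: (HLu) => Eu0 EuN _ _ _.
  have H00 : (size (a.2 ++ q1.2 ++ b.2) + lpos (map snd us2) 0 <= lpos (map snd us) 0)%N.
    rewrite E20 Eu0; lia.
  have H00' : (lpos (map snd us) 0 <= size (a.2 ++ q1.2 ++ b.2) + lpos (map snd us2) 0)%N.
    rewrite E20 Eu0; lia.
  have HJu : (J <= size us)%N.
    rewrite leqNgt; apply/negP => Hlt.
    have := L_all Hm HLu HL2s H00 (ltnW Hlt) (leqnn _).
    rewrite EuN => HK.
    have := L_le Hm Hs HL2s (ltnW Hlt) (leqnn J).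
    rewrite E2N; lia.
  have HmJ1 := L_all Hm HLu HL2s H00 (leqnn J) HJu.
  have HmJ2 := L_all Hm HL2s HLu H00' HJu (leqnn J).
  rewrite E2N in HmJ1 HmJ2.
  have HlJ : lpos (map snd us) J = size (a.2 ++ q1.2 ++ b.2) by apply/eqP; rewrite eqn_leq HmJ1 HmJ2.
  rewrite /amb_sigma -/J.
  have [Hva Hta'] := left_decomp_prefix Hl J.
  have [Hvp Htp] := left_decomp_prefix Hl (size us).
  rewrite take_size in Hvp Htp.
  have [Hvq2 _] := left_decomp_prefix Hl2 (size us2).
  rewrite take_size in Hvq2.
  have Hq2e : q2 = foldl (@pcat V E) e2 us2 by case: Hl2 => _ _ _ [_ ->].
  have Hpe : p = foldl (@pcat V E) e us by case: Hl => _ _ _ [_ ->].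
  have He2 : e.2 = [::] by case: Hl => /andP [_]; rewrite /qlen; case: (e.2).
  apply: (qpath_eq (s:=s) (t:=t)) => //.
  - by rewrite Hq2e.
  - rewrite foldl_left2 He2 cats0 map_take -lpos_D -Hwu HlJ Hw2 drop_size_cat // Hc2 cats0 //.
  - rewrite Hta' -Htp -Hpe.
    have T1 : qtarget t (pcat q1 a) = qtarget t q1 := qtarget_pcat Hc1.
    have C2 : composable t b (pcat q1 a) by rewrite /composable T1.
    have T2 : qtarget t (pcat b (pcat q1 a)) = qtarget t b := qtarget_pcat C2.
    have C3 : composable t q2 (pcat b (pcat q1 a)) by rewrite /composable T2.
    have T3 := qtarget_pcat C3.
    have C4 : composable t c (pcat q2 (pcat b (pcat q1 a))) by rewrite /composable T3.
    have T4 := qtarget_pcat C4.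
    rewrite Hdec T4 /qtarget Hc2 /=.
    by move: Hc4 => /eqP.
- move=> e vs Hr.
  have [Hwv Hp1e HRv] := right_chain HRsz Hr.
  have Ha2 : a.2 = [::] by apply/size0nil.
  case: (HR1) => E10 E1N _ _ _.
  case: (HRv) => Ev0 EvN _ _ _.
  have H00 : (rpos (map snd vs) 0 <= r1 0)%N by rewrite E10 Ev0.
  have H00' : (r1 0 <= rpos (map snd vs) 0)%N by rewrite E10 Ev0 Ha0.
  have HIv : (I <= size vs)%N.
    rewrite leqNgt; apply/negP => Hlt.
    have := R_all Hm HRv HR1 H00 (ltnW Hlt) (leqnn _).
    rewrite EvN => HK.
    have := R_le Hm Hs HR1 (ltnW Hlt) (leqnn I).
    rewrite E1N; lia.
  have H1 := R_all Hm HRv HR1 H00 (leqnn I) HIv.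
  have H2 := R_all Hm HR1 HRv H00' HIv (leqnn I).
  rewrite E1N in H1 H2.
  have HrI : rpos (map snd vs) I = size q1.2.
    apply/eqP; rewrite eqn_leq; apply/andP; split; lia.
  rewrite /amb_pi -/I.
  have [E2 E1] := foldl_right e (take I vs).
  have He2 : e.2 = [::] by case: Hr => /andP [_]; rewrite /qlen; case: (e.2).
  rewrite [q1]surjective_pairing [X in _ = X]surjective_pairing E1 E2.
  congr pair.
  - rewrite -Hp1e Hp1; move: Hc1; rewrite /composable /qstart => /eqP <-.
    by rewrite /qtarget Ha2.
  - rewrite He2 /= map_take -rpos_T1 -Hwv HrI Hw Ha2 /= take_size_cat //.
Qed.
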